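(* Let $\sigma>0$, $b:\mathbb R^d\to\mathbb R^d$, and let $\kappa:(0,\infty)\to\mathbb R$ satisfy $\kappa(r)\le\inf\{-\frac{2}{\sigma^2}\frac{(x-y)\cdot(b(x)-b(y))}{|x-y|^2}: x,y\in\mathbb R^d,\ |x-y|=r\}$, and suppose $\kappa$ is continuous on $(0,\infty)$, bounded below on $(0,\infty)$, and $\liminf_{r\to\infty}\kappa(r)>0$. Then there exists a function $f:[0,\infty)\to\mathbb R$ such that: 1. $f(0)=0$, and $f$ is concave and strictly increasing on $[0,\infty)$; 2. $f\in C^2[0,\infty)$ and there exists a constant $c_0>0$ such that $f''(r)-\frac14 r\kappa(r)f'(r)\le-\frac{c_0}{2}f(r)$ for all $r\ge0$; 3. there exists a constant $\varphi_0>0$ such that $\frac{\varphi_0}{4}r\le f(r)\le r$ for all $r\ge0$. The constants $c_0,\varphi_0$ depend only on the function $\kappa$.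
   Context: At $r=0$, where $\kappa$ is undefined, the term $\frac14 r\kappa(r)f'(r)$ is interpreted as $0$. *)

(* Defs.v *)
From Stdlib Require Import Reals.
From Coquelicot Require Import Coquelicot.
From mathcomp Require Import ssreflect ssrfun ssrbool eqtype ssrnat fintype bigop.
Open Scope R_scope.

Definition vec (d : nat) := 'I_d -> R.
Definition vdot {d : nat} (x y : vec d) : R := \big[Rplus/0]_(i < d) (x i * y i).
Definition vsub {d : nat} (x y : vec d) : vec d := fun i => x i - y i.
Definition vnorm {d : nat} (x : vec d) : R := sqrt (vdot x x).

Definition has_deriv_nonneg (f f' : R -> R) : Prop :=
  forall r, 0 <= r ->
    filterlim (fun y => (f y - f r) / (y - r))
      (within (fun y => 0 <= y /\ y <> r) (locally r)) (locally (f' r)).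

Definition cont_nonneg (g : R -> R) : Prop :=
  forall r, 0 <= r ->
    filterlim g (within (fun y => 0 <= y) (locally r)) (locally (g r)).

Definition C2_nonneg (f f1 f2 : R -> R) : Prop :=
  has_deriv_nonneg f f1 /\ has_deriv_nonneg f1 f2 /\ cont_nonneg f2.

Definition concave_nonneg (f : R -> R) : Prop :=
  forall x y t, 0 <= x -> 0 <= y -> 0 <= t <= 1 ->
    t * f x + (1 - t) * f y <= f (t * x + (1 - t) * y).

Definition strict_incr_nonneg (f : R -> R) : Prop :=
  forall x y, 0 <= x -> x < y -> f x < f y.

(* Main.v *)
Require Import Defs.
From Stdlib Require Import Reals Lra Psatz.
From Coquelicot Require Import Coquelicot.
From mathcomp Require Import ssreflect ssrfun ssrbool eqtype ssrnat fintype bigop.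
Open Scope R_scope.

Lemma exp_cvx (b x y t : R) : 0 <= t <= 1 ->
  exp (-(b * (t * x + (1 - t) * y))) <= t * exp (-(b*x)) + (1 - t) * exp (-(b*y)).
Proof.
move=> Ht. set z := t * x + (1 - t) * y.
have ex : exp (-(b*x)) = exp (-(b*z)) * exp (-(b*(x - z))) by rewrite -exp_plus; f_equal; ring.
have ey : exp (-(b*y)) = exp (-(b*z)) * exp (-(b*(y - z))) by rewrite -exp_plus; f_equal; ring.
have h1 := exp_ineq1_le (-(b*(x - z))).
have h2 := exp_ineq1_le (-(b*(y - z))).
have hz := exp_pos (-(b*z)).
rewrite ex ey.
have e1 : t * (1 + - (b * (x - z))) + (1 - t) * (1 + - (b * (y - z))) = 1 by rewrite /z; ring.
have p1 : 0 <= t * exp (-(b*z)) by nra.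
have p2 : 0 <= (1-t) * exp (-(b*z)) by nra.
have q1 := Rmult_le_compat_l _ _ _ p1 h1.
have q2 := Rmult_le_compat_l _ _ _ p2 h2.
have : exp (-(b*z)) = exp (-(b*z)) * (t * (1 + - (b * (x - z))) + (1 - t) * (1 + - (b * (y - z))))
  by rewrite e1; ring.
lra.
Qed.

Lemma main_f (dl be : R) : 0 < dl <= 1/2 -> 0 < be ->
  let f := fun r => dl * r + (1 - dl) * (1 - exp (-(be * r))) / be in
  (f 0 = 0 /\ concave_nonneg f /\ strict_incr_nonneg f) /\
  (forall r, 0 <= r -> dl * r <= f r /\ f r <= r).
Proof.
move=> Hd Hb f.
split; [split; [|split]|].
- rewrite /f !Rmult_0_r Ropp_0 exp_0. field. lra.
- move=> x y t Hx Hy Ht. rewrite /f.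
  have := exp_cvx be x y t Ht.
  set A := exp (-(be * (t * x + (1 - t) * y))).
  set B := exp (-(be * x)). set C := exp (-(be * y)).
  move=> H.
  have : (1 - dl) / be * A <= (1 - dl) / be * (t * B + (1 - t) * C).
    apply Rmult_le_compat_l => //. apply Rdiv_le_0_compat; lra.
  move=> H2.
  have E1 : forall u, (1 - dl) * (1 - u) / be = (1 - dl)/be - (1-dl)/be * u.
    move=> u; field; lra.
  rewrite !E1. nra.
- move=> x y Hx Hxy. rewrite /f.
  have : exp (-(be*y)) < exp (-(be*x)) by apply exp_increasing; nra.
  move=> H.
  have E1 : forall u, (1 - dl) * (1 - u) / be = (1 - dl)/be - (1-dl)/be * u.
    move=> u; field; lra.
  rewrite !E1.
  have : 0 < (1 - dl)/be by apply Rdiv_lt_0_compat; lra.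
  nra.
- move=> r Hr. rewrite /f.
  have h1 := exp_ineq1_le (-(be*r)).
  have h2 : exp (-(be*r)) <= 1.
    rewrite -exp_0. case: (Rle_lt_or_eq_dec _ _ Hr) => h.
    apply Rlt_le; apply exp_increasing; nra.
    subst r. rewrite Rmult_0_r Ropp_0. lra.
  have E1 : (1 - dl) * (1 - exp (-(be * r))) / be = (1 - dl)/be * (1 - exp (-(be * r))).
    field; lra.
  have E2 : (1 - dl) * r = (1 - dl)/be * (be * r) by field; lra.
  have P : 0 < (1 - dl)/be by apply Rdiv_lt_0_compat; lra.
  rewrite E1. split.
  + have : 0 <= (1 - dl)/be * (1 - exp (-(be * r))) by apply Rmult_le_pos; lra.
    lra.
  + have : (1 - dl)/be * (1 - exp (-(be * r))) <= (1 - dl)/be * (be * r).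
      apply Rmult_le_compat_l; lra.
    lra.
Qed.

Lemma deriv_ok (f f' : R -> R) : (forall r, is_derive f r (f' r)) -> has_deriv_nonneg f f'.
Proof.
move=> H r _ P [e HP].
have := proj1 (is_derive_Reals f r (f' r)) (H r) e (cond_pos e).
case=> dl Hd.
exists dl => y Hy [_ Hyr].
apply HP.
have hne : y - r <> 0 by lra.
have := Hd (y - r) hne.
change (Rabs (y - r) < dl) in Hy.
rewrite Rplus_minus.
move=> Hl. change (Rabs ((f y - f r) / (y - r) - f' r) < e). apply Hl. done.
Qed.

Lemma cont_ok (g : R -> R) : (forall r, continuous g r) -> cont_nonneg g.
Proof.
move=> H r _ P HP. have := H r P HP. rewrite /filtermap /within. apply: filter_imp. auto.
Qed.

Theorem lemma1 (kappa : R -> R) :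
  (forall r, 0 < r -> continuous kappa r) ->
  (exists m, forall r, 0 < r -> m <= kappa r) ->
  (exists eps, 0 < eps /\ exists R0, forall r, R0 <= r -> eps <= kappa r) ->
  exists c0 phi0, 0 < c0 /\ 0 < phi0 /\
  forall (d : nat) (sigma : R) (b : vec d -> vec d),
    0 < sigma ->
    (forall r, 0 < r -> forall x y : vec d, vnorm (vsub x y) = r ->
       kappa r <= - (2 / sigma ^ 2) *
         (vdot (vsub x y) (vsub (b x) (b y)) / (vnorm (vsub x y)) ^ 2)) ->
    exists f : R -> R,
      (f 0 = 0 /\ concave_nonneg f /\ strict_incr_nonneg f) /\
      (exists f1 f2 : R -> R, C2_nonneg f f1 f2 /\
         forall r, 0 <= r -> f2 r - / 4 * r * kappa r * f1 r <= - (c0 / 2) * f r) /\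
      (forall r, 0 <= r -> phi0 / 4 * r <= f r /\ f r <= r).
Proof.
move=> _ [m Hm] [eps [Heps [R0 HR0]]].
set R1 := Rmax R0 1.
have HR1 : 1 <= R1 by apply Rmax_r.
have HR01 : R0 <= R1 by apply Rmax_l.
set M := Rabs m.
have HM : 0 <= M by apply Rabs_pos.
have HmM : - M <= m by have := Rabs_maj2 m; rewrite /M; lra.
set be := R1 * M / 4 + 1.
have Hbe : 0 < be by rewrite /be; nra.
set E := exp (-(be * R1)).
have HE : 0 < E by apply exp_pos.
have HE1 : E < 1 by rewrite /E -exp_0; apply exp_increasing; nra.
set dl := E / (2 * (R1 * M + 1)).
have HRM : 0 < R1 * M + 1 by nra.
have Hdl : 0 < dl by apply Rdiv_lt_0_compat; lra.
have Hdl2 : dl <= 1/2.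
  rewrite /dl. apply (Rmult_le_reg_r (2 * (R1 * M + 1))); first lra.
  field_simplify; nra.
have HdlM : R1 * M * dl <= E / 2.
  have : E / 2 - R1 * M * dl = E / (2 * (R1 * M + 1)) by rewrite /dl; field; lra.
  have : 0 < E / (2 * (R1 * M + 1)) by apply Rdiv_lt_0_compat; lra.
  lra.
set c0 := Rmin (E / (2 * R1)) (eps * dl / 2).
have Hc0a : c0 <= E / (2 * R1) by apply Rmin_l.
have Hc0b : c0 <= eps * dl / 2 by apply Rmin_r.
have Hc0 : 0 < c0.
  rewrite /c0 /Rmin; case: Rle_dec => _.
  apply Rdiv_lt_0_compat; lra. nra.
have Hc0R : c0 * R1 <= E / 2.
  have : E / (2 * R1) * R1 = E / 2 by field; lra.
  nra.
exists c0, (4 * dl). split => //. split; first lra.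
move=> d sigma b _ _.
have [H1 H2] := main_f dl be (conj Hdl Hdl2) Hbe.
set f := fun r => dl * r + (1 - dl) * (1 - exp (-(be * r))) / be.
exists f. split => //. split.
- exists (fun r => dl + (1 - dl) * exp (-(be * r))), (fun r => - (be * (1 - dl) * exp (-(be * r)))).
  split. split; [|split].
  + apply deriv_ok => r. rewrite /f. auto_derive => //. field. lra.
  + apply deriv_ok => r. auto_derive => //. ring.
  + apply cont_ok => r. apply: ex_derive_continuous. auto_derive => //.
  + move=> r Hr. have [Hf1 Hf2] := H2 r Hr.
    set e := exp (-(be * r)).
    have He : 0 < e by apply exp_pos.
    have Hfp : 0 < dl + (1 - dl) * e by nra.
    have Hf1' : dl * r <= f r := Hf1. have Hf2' : f r <= r := Hf2. clear Hf1 Hf2.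
    have Hfr : 0 <= f r by have := Rmult_le_pos dl r (Rlt_le _ _ Hdl) Hr; lra.
    change (- (be * (1 - dl) * e) - / 4 * r * kappa r * (dl + (1 - dl) * e) <= - (c0 / 2) * f r).
    case: (Rlt_le_dec r R1) => hr.
    *
      have hk : - (r * M) <= r * kappa r.
        case: (Rle_lt_or_eq_dec _ _ Hr) => h.
        have := Hm r h. nra. subst r. lra.
      have HeE : E <= e by apply Rlt_le; rewrite /e /E; apply exp_increasing; nra.
      have t1 : - / 4 * r * kappa r * (dl + (1 - dl) * e) <= / 4 * (r * M) * (dl + (1 - dl) * e) by nra.
      have t2 : / 4 * (r * M) * ((1 - dl) * e) <= / 4 * (R1 * M) * ((1 - dl) * e).
        apply Rmult_le_compat_r. nra. apply Rmult_le_compat_l. lra. nra.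
      have t3 : r * M * dl <= R1 * M * dl.
        have := Rmult_le_pos (R1 - r) (M * dl) ltac:(lra) ltac:(nra). lra.
      have t4 : c0 * f r <= c0 * R1.
        apply Rmult_le_compat_l; lra.
      have eb : / 4 * (R1 * M) = be - 1 by rewrite /be; field.
      rewrite eb in t2.
      have t6 : E / 2 <= (1 - dl) * e.
        have := Rmult_le_compat (1/2) (1 - dl) E e ltac:(lra) ltac:(lra) ltac:(lra) HeE. lra.
      lra.
    *
      have hk : eps <= kappa r by apply HR0; lra.
      have t1 : r * eps * dl <= r * kappa r * (dl + (1 - dl) * e).
        have a1 : 0 <= r * eps by apply Rmult_le_pos; lra.
        have a2 : r * eps <= r * kappa r by apply Rmult_le_compat_l; lra.
        have a3 : dl <= dl + (1 - dl) * e by have := Rmult_le_pos (1 - dl) e ltac:(lra) ltac:(lra); lra.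
        have := Rmult_le_compat _ _ _ _ a1 (Rlt_le _ _ Hdl) a2 a3. lra.
      have t2 : 0 <= be * (1 - dl) * e by apply Rmult_le_pos; [apply Rmult_le_pos|]; lra.
      have t4 : c0 * f r <= c0 * r by apply Rmult_le_compat_l; lra.
      have t5 : c0 * r <= eps * dl / 2 * r by apply Rmult_le_compat_r; lra.
      lra.
- move=> r Hr. have := H2 r Hr. rewrite /f. lra.
Qed.
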